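(* Let $\mathbb{F}_{q^m}$ be a field extension of $\mathbb{F}=\mathbb{F}_q$ and let $G_i\in\mathbb{F}_{q^m}^{a_i\times n_i}$, $i=1,2$, be matrices of full row rank. Set $G=\begin{pmatrix}G_1&0\\0&G_2\end{pmatrix}\in\mathbb{F}_{q^m}^{(a_1+a_2)\times(n_1+n_2)}$. Let $\mathcal{M}_i=(\mathbb{F}^{n_i},\rho_i)$ and $\mathcal{N}=(\mathbb{F}^{n_1+n_2},\hat\rho)$ be the $q$-matroids represented by $G_1,G_2$ and $G$. Identify $\mathbb{F}^{n_1+n_2}=\mathbb{F}^{n_1}\oplus\mathbb{F}^{n_2}$ in the natural way. (a) If $F=F_1\oplus F_2$ with $F_i$ a flat of $\mathcal{M}_i$, then $F$ is a flat of $\mathcal{N}$. (b) If $O=O_1\oplus O_2$ with $O_i$ an open space of $\mathcal{M}_i$, then $O$ is an open space of $\mathcal{N}$. As a consequence, $\mathcal{Z}(\mathcal{M}_1\oplus\mathcal{M}_2)\subseteq\mathcal{Z}(\mathcal{N})$, and every independent space of $\mathcal{N}$ is an independent space of $\mathcal{M}_1\oplus\mathcal{M}_2$.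
   Context: A $q$-matroid is $\mathcal{M}=(E,\rho)$, $E$ a finite-dimensional $\mathbb{F}_q$-vector space, $\rho$ from subspaces to $\mathbb{Z}_{\ge0}$ with $0\le\rho(V)\le\dim V$, monotone and submodular. For $G\in\mathbb{F}_{q^m}^{k\times n}$ of rank $k$, the $q$-matroid represented by $G$ is $(\mathbb{F}_q^n,\rho)$ with $\rho(V)=\mathrm{rk}(GY^{\mathsf T})$ where $Y$ is any matrix over $\mathbb{F}_q$ with row space $V$. Independent: $\rho(V)=\dim V$. Circuit: dependent subspace all of whose proper subspaces are independent; open: a sum of circuits (empty sum $=0$). Flat: $\rho(F+\langle x\rangle)>\rho(F)$ for all $x\notin F$. Cyclic core: $\mathrm{cyc}(V)=\{x\in V\mid\rho(W)=\rho(V)\text{ for all }W\le V\text{ with }W+\langle x\rangle=V\}$; cyclic: $\mathrm{cyc}(V)=V$ (equivalently, open). $\mathcal{Z}(\mathcal{M})$: set of cyclic flats. Direct sum: for $E=E_1\oplus E_2$ with projections $\pi_i$, $\mathcal{M}_1\oplus\mathcal{M}_2=(E,\rho)$ where $\rho(V)=\dim V+\min_{X\le V}(\rho_1(\pi_1(X))+\rho_2(\pi_2(X))-\dim X)$. *)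

(* Defs.v *)
From HB Require Import structures.
From mathcomp Require Import all_boot all_order all_algebra all_field.
Set Implicit Arguments. Unset Strict Implicit. Unset Printing Implicit Defensive.
Import GRing.Theory.
Local Open Scope ring_scope.

(* Subspaces of F^n are represented by square matrices 'M[F]_n through their
   row space (mxalgebra, scope %MS); vectors are row vectors 'rV[F]_n.
   A rank function is rho : 'M[F]_n -> nat, meant to depend only on the
   row space. *)

Section QMatroid.
Variables (F : fieldType) (n : nat).
Implicit Types (rho : 'M[F]_n -> nat) (V W X : 'M[F]_n).

Definition qindep rho V : Prop := rho V = \rank V.

Definition qcircuit rho V : Prop :=
  ~ qindep rho V /\ (forall W, (W < V)%MS -> qindep rho W).

Definition qopen rho V : Prop :=
  exists s : seq 'M[F]_n, (forall C, C \in s -> qcircuit rho C) /\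
                         (V == \sum_(C <- s) C)%MS.

Definition qflat rho V : Prop :=
  forall x : 'rV[F]_n, ~~ (x <= V)%MS -> (rho V < rho (V + x)%MS)%N.

Definition in_cyc rho V (x : 'rV[F]_n) : Prop :=
  (x <= V)%MS /\
  (forall W, (W <= V)%MS -> (W + x == V)%MS -> rho W = rho V).

Definition qcyclic rho V : Prop :=
  forall x : 'rV[F]_n, (x <= V)%MS <-> in_cyc rho V x.

Definition qcyclic_flat rho V : Prop := qcyclic rho V /\ qflat rho V.

End QMatroid.

(* The q-matroid represented by G in L^{k x n}, L an extension of F:
   rho(V) = rk(G Y^T) with Y over F having row space V. *)
Definition qrank (F : fieldType) (L : fieldExtType F) (k n : nat)
  (G : 'M[L]_(k, n)) (V : 'M[F]_n) : nat :=
  \rank (G *m (map_mx (in_alg L) V)^T).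

(* Direct sum on F^{n1+n2} = F^{n1} (+) F^{n2} (first n1 coordinates, last n2):
   rho(V) = dim V + min_{X <= V} (rho1(pi1 X) + rho2(pi2 X) - dim X),
   written equivalently in nat as min_{X <= V} (rho1(pi1 X) + rho2(pi2 X)
   + (dim V - dim X)), since dim X <= dim V; X = V gives a value, and the
   default index rank V is the value at X = 0 (so it does not change the min). *)
Definition dsum_rank (F : finFieldType) (n1 n2 : nat)
  (rho1 : 'M[F]_n1 -> nat) (rho2 : 'M[F]_n2 -> nat)
  (V : 'M[F]_(n1 + n2)) : nat :=
  \big[minn/(\rank V)%N]_(X : 'M[F]_(n1 + n2) | (X <= V)%MS)
     (rho1 (<<lsubmx X>>)%MS + rho2 (<<rsubmx X>>)%MS + (\rank V - \rank X))%N.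

Definition dsum_space (F : fieldType) (n1 n2 : nat)
  (F1 : 'M[F]_n1) (F2 : 'M[F]_n2) : 'M[F]_(n1 + n2) :=
  block_mx F1 0 0 F2.

(* Main.v *)
Require Import Defs.
From HB Require Import structures.
From mathcomp Require Import all_boot all_order all_algebra all_field.
From mathcomp Require Import zify.
Set Implicit Arguments. Unset Strict Implicit. Unset Printing Implicit Defensive.
Import GRing.Theory.

Lemma bigmin_seq_le (I : eqType) (r : seq I) (P : pred I) (F : I -> nat) x0 i :
  i \in r -> P i -> \big[minn/x0]_(j <- r | P j) F j <= F i.
Proof.
elim: r => [//|j r IH]; rewrite inE big_cons => /orP[/eqP <- Pi|ir Pi].
  by rewrite Pi geq_minl.
case: (P j); last exact: IH.
by apply: leq_trans (geq_minr _ _) (IH ir Pi).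
Qed.

Lemma bigmin_le (I : finType) (P : pred I) (F : I -> nat) x0 i :
  P i -> \big[minn/x0]_(j | P j) F j <= F i.
Proof. by move=> Pi; apply: bigmin_seq_le; rewrite ?mem_index_enum. Qed.

Lemma bigmin_le0 (I : finType) (P : pred I) (F : I -> nat) x0 :
  \big[minn/x0]_(j | P j) F j <= x0.
Proof.
rewrite unlock; elim: (index_enum I) => [//|j r IH] /=.
by case: (P j) => //; apply: leq_trans (geq_minr _ _) IH.
Qed.

Lemma bigmin_ge (I : finType) (P : pred I) (F : I -> nat) x0 c :
  c <= x0 -> (forall i, P i -> c <= F i) -> c <= \big[minn/x0]_(j | P j) F j.
Proof.
move=> h0 h; apply: (big_ind (fun v => c <= v)) => //.
by move=> u v hu hv; rewrite leq_min hu.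
Qed.

Lemma bigmin_att (I : finType) (P : pred I) (F : I -> nat) x0 :
  \big[minn/x0]_(j | P j) F j = x0 \/
  exists2 i, P i & \big[minn/x0]_(j | P j) F j = F i.
Proof.
pose Q v := v = x0 \/ exists2 i, P i & v = F i.
apply: (big_ind Q); first by left.
  by move=> u v hu hv; rewrite /minn; case: ifP.
by move=> i Pi; right; exists i.
Qed.

Local Open Scope ring_scope.

Section Rk.
Variables (Fq : fieldType) (L : fieldExtType Fq).

Definition TL a n m (G : 'M[L]_(a, n)) (V : 'M[Fq]_(m, n)) : 'M[L]_(m, a) :=
  map_mx (in_alg L) V *m G^T.

Definition rk a n m (G : 'M[L]_(a, n)) (V : 'M[Fq]_(m, n)) : nat := \rank (TL G V).

Lemma qrankE a n (G : 'M[L]_(a, n)) V : qrank G V = rk G V.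
Proof. by rewrite /qrank /rk /TL -mxrank_tr trmx_mul trmxK. Qed.

Lemma TLS a n m1 m2 (G : 'M[L]_(a, n)) (V : 'M_(m1, n)) (W : 'M_(m2, n)) :
  (V <= W)%MS -> (TL G V <= TL G W)%MS.
Proof. by move=> h; rewrite /TL submxMr // map_submx. Qed.

Lemma rkS a n m1 m2 (G : 'M[L]_(a, n)) (V : 'M_(m1, n)) (W : 'M_(m2, n)) :
  (V <= W)%MS -> (rk G V <= rk G W)%N.
Proof. by move=> h; apply: mxrankS; apply: TLS. Qed.

Lemma rk_eq a n m1 m2 (G : 'M[L]_(a, n)) (V : 'M_(m1, n)) (W : 'M_(m2, n)) :
  (V :=: W)%MS -> rk G V = rk G W.
Proof. by move=> h; apply/eqP; rewrite eqn_leq !rkS // h. Qed.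

Lemma rk_gen a n m (G : 'M[L]_(a, n)) (V : 'M_(m, n)) : rk G <<V>>%MS = rk G V.
Proof. exact/rk_eq/genmxE. Qed.

Lemma TL_adds a n m1 m2 (G : 'M[L]_(a, n)) (V : 'M_(m1, n)) (W : 'M_(m2, n)) :
  (TL G (V + W)%MS :=: TL G V + TL G W)%MS.
Proof.
apply/eqmxP/andP; split.
  have h : ((V + W)%MS <= col_mx V W)%MS by rewrite addsmxE.
  apply: submx_trans (TLS G h) _.
  by rewrite /TL map_col_mx mul_col_mx -addsmxE.
by rewrite addsmx_sub !TLS ?addsmxSl ?addsmxSr.
Qed.

Lemma rk0 a n m (G : 'M[L]_(a, n)) : rk G (0 : 'M_(m, n)) = 0%N.
Proof. by rewrite /rk /TL map_mx0 mul0mx mxrank0. Qed.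

Lemma rk_le_rank a n m (G : 'M[L]_(a, n)) (V : 'M_(m, n)) : (rk G V <= \rank V)%N.
Proof. by rewrite /rk /TL -(mxrank_map (in_alg L) V) mxrankM_maxl. Qed.

End Rk.

Section Block.
Variables (Fq : fieldType) (L : fieldExtType Fq).
Variables (a1 a2 n1 n2 : nat) (G1 : 'M[L]_(a1, n1)) (G2 : 'M[L]_(a2, n2)).
Let G : 'M[L]_(a1 + a2, n1 + n2) := block_mx G1 0 0 G2.

Lemma TL_row m (x : 'M[Fq]_(m, n1)) (y : 'M[Fq]_(m, n2)) :
  TL G (row_mx x y) = row_mx (TL G1 x) (TL G2 y).
Proof.
rewrite /TL /G tr_block_mx !trmx0 map_row_mx mul_row_block.
by rewrite !mulmx0 addr0 add0r.
Qed.

Lemma TL_split m (X : 'M[Fq]_(m, n1 + n2)) :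
  TL G X = row_mx (TL G1 (lsubmx X)) (TL G2 (rsubmx X)).
Proof. by rewrite -TL_row hsubmxK. Qed.

Lemma TL0 a n m (H : 'M[L]_(a, n)) : TL H (0 : 'M[Fq]_(m, n)) = 0.
Proof. by rewrite /TL map_mx0 mul0mx. Qed.

Lemma rk_block m1 m2 (A : 'M[Fq]_(m1, n1)) (B : 'M[Fq]_(m2, n2)) :
  rk G (block_mx A 0 0 B) = (rk G1 A + rk G2 B)%N.
Proof.
rewrite /rk /TL map_block_mx !map_mx0 /G tr_block_mx !trmx0 mulmx_block.
by rewrite !mulmx0 !mul0mx !addr0 !add0r rank_diag_block_mx.
Qed.

Lemma rk_row0 m (A : 'M[Fq]_(m, n1)) : rk G (row_mx A 0) = rk G1 A.
Proof. by rewrite /rk TL_row TL0 rank_row_mx0. Qed.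

Lemma rk_0row m (A : 'M[Fq]_(m, n2)) : rk G (row_mx 0 A) = rk G2 A.
Proof. by rewrite /rk TL_row TL0 rank_row_0mx. Qed.

Lemma rk_split_le m (X : 'M[Fq]_(m, n1 + n2)) :
  (rk G X <= rk G1 (lsubmx X) + rk G2 (rsubmx X))%N.
Proof.
rewrite /rk TL_split.
have -> : row_mx (TL G1 (lsubmx X)) (TL G2 (rsubmx X)) =
  row_mx (TL G1 (lsubmx X)) 0 + row_mx 0 (TL G2 (rsubmx X)).
  by rewrite add_row_mx addr0 add0r.
by apply: leq_trans (mxrank_add _ _) _; rewrite rank_row_mx0 rank_row_0mx.
Qed.

End Block.

Section Proj.
Variables (F : fieldType) (n1 n2 : nat).
Definition Pl : 'M[F]_(n1 + n2, n1) := col_mx 1%:M 0.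
Definition Pr : 'M[F]_(n1 + n2, n2) := col_mx 0 1%:M.
Lemma lsubE m (X : 'M[F]_(m, n1 + n2)) : lsubmx X = X *m Pl.
Proof. by rewrite -{2}(hsubmxK X) /Pl mul_row_col mulmx1 mulmx0 addr0. Qed.
Lemma rsubE m (X : 'M[F]_(m, n1 + n2)) : rsubmx X = X *m Pr.
Proof. by rewrite -{2}(hsubmxK X) /Pr mul_row_col mulmx1 mulmx0 add0r. Qed.
Lemma lsubS m1 m2 (X : 'M[F]_(m1, n1 + n2)) (Y : 'M[F]_(m2, n1 + n2)) :
  (X <= Y)%MS -> (lsubmx X <= lsubmx Y)%MS.
Proof. by move=> h; rewrite !lsubE submxMr. Qed.
Lemma rsubS m1 m2 (X : 'M[F]_(m1, n1 + n2)) (Y : 'M[F]_(m2, n1 + n2)) :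
  (X <= Y)%MS -> (rsubmx X <= rsubmx Y)%MS.
Proof. by move=> h; rewrite !rsubE submxMr. Qed.
End Proj.

Section Gen.
Variable F : fieldType.

Lemma adds_lt m1 n (K : 'M[F]_(m1, n)) (y : 'rV[F]_n) :
  ~~ (y <= K)%MS -> (\rank K < \rank (K + y)%MS)%N.
Proof.
move=> hy; rewrite (ltn_leqif (mxrank_leqif_sup (addsmxSl _ _))).
by rewrite addsmx_sub submx_refl.
Qed.

Lemma codim1 m1 m2 n (K : 'M[F]_(m1, n)) (R : 'M[F]_(m2, n)) :
  (K <= R)%MS -> (\rank R <= (\rank K).+1)%N ->
  exists y : 'rV[F]_n, (y <= R)%MS /\ (R <= K + y)%MS.
Proof.
move=> hKR hr; case hRK: (R <= K)%MS.
  by exists 0; rewrite sub0mx; split => //; apply: submx_trans hRK (addsmxSl _ _).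
have /row_subPn [i hi] : ~~ (R <= K)%MS by rewrite hRK.
exists (row i R); split; first exact: row_sub.
have hs : (K + row i R <= R)%MS by rewrite addsmx_sub hKR row_sub.
have := adds_lt hi => hlt.
have e := mxrank_leqif_sup hs.
case: e => _ <-; rewrite eqn_leq mxrankS //=.
by apply: leq_trans hr hlt.
Qed.

Lemma hyper n (X Z : 'M[F]_n) : (X <= Z)%MS -> ~~ (Z <= X)%MS ->
  exists W : 'M[F]_n, exists x : 'rV[F]_n,
    [/\ (W <= Z)%MS, (x <= Z)%MS, (W + x == Z)%MS, (X <= W)%MS &
        (\rank W < \rank Z)%N].
Proof.
move=> hXZ /row_subPn [i hi]; set x := row i Z.
set U := (X + x)%MS; set D := (Z :\: U)%MS.
have hUZ : (U <= Z)%MS by rewrite addsmx_sub hXZ row_sub.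
exists (X + D)%MS, x; split.
- by rewrite addsmx_sub hXZ diffmxSl.
- exact: row_sub.
- apply/andP; split; first by rewrite !addsmx_sub hXZ diffmxSl row_sub.
  rewrite -{1}(addsmx_diff_cap_eq Z U) addsmx_sub; apply/andP; split.
    by apply: submx_trans (addsmxSl _ _); rewrite addsmxSr.
  apply: submx_trans (capmxSr _ _) _.
  by rewrite addsmx_sub addsmxSr andbT; apply: submx_trans (addsmxSl _ _); apply: addsmxSl.
- exact: addsmxSl.
have h1 : (\rank (X + D)%MS <= \rank X + \rank D)%N.
  by case: (mxrank_adds_leqif X D).
have h2 := mxrank_cap_compl Z U.
have h3 : \rank (Z :&: U)%MS = \rank U.
  apply/eqP; rewrite eqn_leq mxrankS ?capmxSr //= mxrankS //.
  by rewrite sub_capmx hUZ submx_refl.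
have h4 := adds_lt hi.
rewrite -/U -/D in h2 h4; lia.
Qed.

Lemma row0S m1 m2 n p (A : 'M[F]_(m1, n)) (B : 'M[F]_(m2, n)) :
  (A <= B)%MS -> (row_mx A (0 : 'M_(m1, p)) <= row_mx B (0 : 'M_(m2, p)))%MS.
Proof.
case/submxP=> D ->; apply/submxP; exists D.
by rewrite mul_mx_row mulmx0.
Qed.

Lemma row0S' m1 m2 n p (A : 'M[F]_(m1, n)) (B : 'M[F]_(m2, n)) :
  (A <= B)%MS -> (row_mx (0 : 'M_(m1, p)) A <= row_mx (0 : 'M_(m2, p)) B)%MS.
Proof.
case/submxP=> D ->; apply/submxP; exists D.
by rewrite mul_mx_row mulmx0.
Qed.

End Gen.
Lemma blk_sub (F : fieldType) n1 n2 m1 m2 m (A : 'M[F]_(m1, n1)) (B : 'M[F]_(m2, n2))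
  (x : 'M[F]_(m, n1)) (y : 'M[F]_(m, n2)) :
  (row_mx x y <= block_mx A 0 0 B)%MS = (x <= A)%MS && (y <= B)%MS.
Proof.
apply/idP/andP.
  move=> h; split.
    have := lsubS h; rewrite row_mxKl block_mxEh row_mxKl => h'.
    by apply: submx_trans h' _; rewrite col_mx_sub submx_refl sub0mx.
  have := rsubS h; rewrite row_mxKr block_mxEh row_mxKr => h'.
  by apply: submx_trans h' _; rewrite col_mx_sub submx_refl sub0mx.
case=> /submxP[D1 ->] /submxP[D2 ->].
by apply/submxP; exists (row_mx D1 D2); rewrite mul_row_block !mulmx0 addr0 add0r.
Qed.

Lemma rk_adds_lt (Fq : fieldType) (L : fieldExtType Fq) a n m1 m2
  (H : 'M[L]_(a, n)) (F : 'M[Fq]_(m1, n)) (x : 'M[Fq]_(m2, n)) :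
  (rk H F < rk H (F + x)%MS)%N = ~~ (TL H x <= TL H F)%MS.
Proof.
rewrite /rk (TL_adds H F x).
rewrite (ltn_leqif (mxrank_leqif_sup (addsmxSl _ _))).
by rewrite addsmx_sub submx_refl.
Qed.

Section Main.
Variables (Fq : finFieldType) (L : fieldExtType Fq).
Variables (a1 a2 n1 n2 : nat) (G1 : 'M[L]_(a1, n1)) (G2 : 'M[L]_(a2, n2)).
Let G : 'M[L]_(a1 + a2, n1 + n2) := block_mx G1 0 0 G2.

Lemma TL_blk m1 m2 (A : 'M[Fq]_(m1, n1)) (B : 'M[Fq]_(m2, n2)) :
  TL G (block_mx A 0 0 B) = block_mx (TL G1 A) 0 0 (TL G2 B).
Proof.
rewrite /TL map_block_mx !map_mx0 /G tr_block_mx !trmx0 mulmx_block.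
by rewrite !mulmx0 !mul0mx !addr0 !add0r.
Qed.

Lemma part_a (F1 : 'M[Fq]_n1) (F2 : 'M[Fq]_n2) :
  qflat (qrank G1) F1 -> qflat (qrank G2) F2 -> qflat (qrank G) (dsum_space F1 F2).
Proof.
move=> h1 h2 x; rewrite /dsum_space !qrankE rk_adds_lt TL_blk TL_split.
rewrite -[x]hsubmxK blk_sub row_mxKl row_mxKr blk_sub negb_and => /orP[hx|hx].
  have := h1 _ hx; rewrite !qrankE rk_adds_lt => /negbTE ->; by [].
have := h2 _ hx; rewrite !qrankE rk_adds_lt => /negbTE ->; by rewrite andbF.
Qed.


Lemma rk_indep_sub (Fq' : fieldType) (L' : fieldExtType Fq') a n m1 m2
  (H : 'M[L']_(a, n)) (I : 'M[Fq']_(m1, n)) (X : 'M[Fq']_(m2, n)) :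
  rk H I = \rank I -> (X <= I)%MS -> rk H X = \rank X.
Proof.
rewrite /rk /TL => hI hX.
have k := mxrank_mul_ker (map_mx (in_alg L') I) H^T.
have k0 : ((map_mx (in_alg L') I :&: kermx H^T)%MS <= (0 : 'M_n))%MS.
  rewrite submx0 -mxrank_eq0; apply/eqP.
  by apply/eqP; rewrite -(eqn_add2l (\rank (map_mx (in_alg L') I *m H^T))) addn0 k hI mxrank_map.
have k' := mxrank_mul_ker (map_mx (in_alg L') X) H^T.
have : ((map_mx (in_alg L') X :&: kermx H^T)%MS <= (0 : 'M_n))%MS.
  apply: submx_trans k0; apply: capmxS => //; by rewrite map_submx.
rewrite submx0 -mxrank_eq0 => /eqP e; rewrite e addn0 mxrank_map in k'.
exact: k'.
Qed.

Lemma part_d (I : 'M[Fq]_(n1 + n2)) :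
  qindep (qrank G) I -> qindep (dsum_rank (qrank G1) (qrank G2)) I.
Proof.
rewrite /qindep qrankE => hI; rewrite /dsum_rank.
apply/eqP; rewrite eqn_leq bigmin_le0 /=; apply: bigmin_ge => // X hX.
rewrite !qrankE !rk_gen.
have hr := rk_indep_sub hI hX.
have := rk_split_le G1 G2 X; rewrite -/G hr => h.
have := mxrankS hX => hXI.
by rewrite -{1}(subnKC hXI) leq_add2r.
Qed.


Definition Q1 : 'M[Fq]_(n1, n1 + n2) := row_mx 1%:M 0.
Definition Q2 : 'M[Fq]_(n2, n1 + n2) := row_mx 0 1%:M.
Lemma Q1E m (C : 'M[Fq]_(m, n1)) : C *m Q1 = row_mx C 0.
Proof. by rewrite /Q1 mul_mx_row mulmx1 mulmx0. Qed.
Lemma Q2E m (C : 'M[Fq]_(m, n2)) : C *m Q2 = row_mx 0 C.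
Proof. by rewrite /Q2 mul_mx_row mulmx1 mulmx0. Qed.

Lemma sum_gen_mul k p (s : seq 'M[Fq]_k) (Q : 'M[Fq]_(k, p)) :
  ((\sum_(C <- s) <<C *m Q>>)%MS :=: (\sum_(C <- s) C)%MS *m Q)%MS.
Proof.
elim: s => [|c s IH].
  by rewrite !big_nil mul0mx; apply/eqmxP; rewrite !sub0mx.
rewrite !big_cons; apply: eqmx_trans (adds_eqmx (genmxE _) IH) _.
exact: eqmx_sym (addsmxMr _ _ _).
Qed.

Lemma circ1 (C : 'M[Fq]_n1) :
  qcircuit (qrank G1) C -> qcircuit (qrank G) <<C *m Q1>>%MS.
Proof.
case=> hn hs; split.
  rewrite /qindep qrankE rk_gen genmxE Q1E rk_row0 rank_row_mx0; by rewrite /qindep qrankE in hn.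
move=> W; rewrite ltmxE genmxE Q1E => /andP[hW hnW].
have r0 : rsubmx W = 0.
  apply: submx0null; have := rsubS hW; rewrite row_mxKr; exact.
have eW : W = row_mx (lsubmx W) 0 by rewrite -{1}(hsubmxK W) r0.
have hlt : (<<lsubmx W>> < C)%MS.
  rewrite ltmxE genmxE; apply/andP; split.
    by have := lsubS hW; rewrite row_mxKl.
  apply: contra hnW; rewrite genmxE => h; rewrite eW -!Q1E genmxE; exact: submxMr.
have := hs _ hlt; rewrite /qindep !qrankE rk_gen genmxE => h1.
by rewrite eW rk_row0 rank_row_mx0.
Qed.

Lemma circ2 (C : 'M[Fq]_n2) :
  qcircuit (qrank G2) C -> qcircuit (qrank G) <<C *m Q2>>%MS.
Proof.
case=> hn hs; split.
  rewrite /qindep qrankE rk_gen genmxE Q2E rk_0row rank_row_0mx; by rewrite /qindep qrankE in hn.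
move=> W; rewrite ltmxE genmxE Q2E => /andP[hW hnW].
have r0 : lsubmx W = 0.
  apply: submx0null; have := lsubS hW; rewrite row_mxKl; exact.
have eW : W = row_mx 0 (rsubmx W) by rewrite -{1}(hsubmxK W) r0.
have hlt : (<<rsubmx W>> < C)%MS.
  rewrite ltmxE genmxE; apply/andP; split.
    by have := rsubS hW; rewrite row_mxKr.
  apply: contra hnW; rewrite genmxE => h; rewrite eW -!Q2E genmxE; exact: submxMr.
have := hs _ hlt; rewrite /qindep !qrankE rk_gen genmxE => h1.
by rewrite eW rk_0row rank_row_0mx.
Qed.

Lemma part_b (O1 : 'M[Fq]_n1) (O2 : 'M[Fq]_n2) :
  qopen (qrank G1) O1 -> qopen (qrank G2) O2 -> qopen (qrank G) (dsum_space O1 O2).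
Proof.
case=> s1 [hs1 /eqmxP e1] [s2 [hs2 /eqmxP e2]].
exists ([seq <<C *m Q1>>%MS | C <- s1] ++ [seq <<C *m Q2>>%MS | C <- s2]); split.
  move=> C; rewrite mem_cat => /orP[] /mapP[C' hC' ->].
    by apply: circ1; apply: hs1.
  by apply: circ2; apply: hs2.
apply/eqmxP; rewrite big_cat !big_map.
apply: eqmx_trans _ (eqmx_sym (adds_eqmx (sum_gen_mul _ _) (sum_gen_mul _ _))).
rewrite /dsum_space block_mxEv -Q1E -Q2E; apply: eqmx_trans (eqmx_sym (addsmxE _ _)) _.
exact: adds_eqmx (eqmxMr _ e1) (eqmxMr _ e2).
Qed.

End Main.

Section Main2.
Variables (Fq : finFieldType) (L : fieldExtType Fq).
Variables (a1 a2 n1 n2 : nat) (G1 : 'M[L]_(a1, n1)) (G2 : 'M[L]_(a2, n2)).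
Let G : 'M[L]_(a1 + a2, n1 + n2) := block_mx G1 0 0 G2.
Let r := dsum_rank (qrank G1) (qrank G2).
Let s m (V : 'M[Fq]_(m, n1 + n2)) := (rk G1 (lsubmx V) + rk G2 (rsubmx V))%N.
Let piZ (V : 'M[Fq]_(n1 + n2)) := dsum_space <<lsubmx V>>%MS <<rsubmx V>>%MS.

Lemma r_term (V X : 'M[Fq]_(n1 + n2)) : (X <= V)%MS ->
  (r V <= s X + (\rank V - \rank X))%N.
Proof.
move=> h; rewrite /r /dsum_rank.
by apply: leq_trans (@bigmin_le _ (fun X => (X <= V)%MS) _ _ X h) _; rewrite !qrankE !rk_gen.
Qed.

Lemma r_le_s V : (r V <= s V)%N.
Proof. by apply: leq_trans (r_term (submx_refl V)) _; rewrite subnn addn0. Qed.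

Lemma r_le_rank V : (r V <= \rank V)%N.
Proof. exact: bigmin_le0. Qed.

Lemma sS m1 m2 (X : 'M[Fq]_(m1, n1 + n2)) (Y : 'M[Fq]_(m2, n1 + n2)) :
  (X <= Y)%MS -> (s X <= s Y)%N.
Proof. by move=> h; rewrite leq_add // rkS // ?lsubS ?rsubS. Qed.

Lemma s0 : s (0 : 'M[Fq]_(n1 + n2)) = 0%N.
Proof. by rewrite /s linear0 linear0 !rk0. Qed.

Lemma S1 Z : qcyclic r Z -> (s Z <= r Z)%N.
Proof.
move=> hc.
have key : forall X : 'M[Fq]_(n1 + n2), (X <= Z)%MS ->
    r Z = (s X + (\rank Z - \rank X))%N -> (s Z <= r Z)%N.
  move=> X hX e; case hZX: (Z <= X)%MS.
    by rewrite e; apply: leq_trans (leq_addr _ _); apply: sS.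
  have [W [x [hWZ hxZ hWx hXW hrk]]] := hyper hX (negbT hZX).
  have [_ hcx] := (hc x).1 hxZ.
  have := hcx W hWZ hWx => eW.
  have := r_term hXW; rewrite eW e => h.
  have := mxrankS hXW => h'.
  exfalso; move: h; lia.
have := @bigmin_att _ (fun X : 'M[Fq]_(n1 + n2) => (X <= Z)%MS)
   (fun X : 'M[Fq]_(n1 + n2) => qrank G1 <<lsubmx X>>%MS + qrank G2 <<rsubmx X>>%MS + (\rank Z - \rank X))%N
   (\rank Z); case=> [e|[X hX e]].
  apply: (key 0); first exact: sub0mx.
  by rewrite s0 mxrank0 subn0; exact: e.
apply: (key X hX); rewrite /r /dsum_rank e !qrankE !rk_gen //.
Qed.


Lemma le_pi V : (V <= piZ V)%MS.
Proof.
have : (row_mx (lsubmx V) (rsubmx V) <= piZ V)%MS.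
  by rewrite /piZ /dsum_space blk_sub !genmxE !submx_refl.
by rewrite hsubmxK.
Qed.

Lemma lsub_pi V : (lsubmx (piZ V) <= lsubmx V)%MS.
Proof.
by rewrite /piZ /dsum_space block_mxEh row_mxKl col_mx_sub genmxE submx_refl sub0mx.
Qed.

Lemma rsub_pi V : (rsubmx (piZ V) <= rsubmx V)%MS.
Proof.
by rewrite /piZ /dsum_space block_mxEh row_mxKr col_mx_sub genmxE submx_refl sub0mx.
Qed.

Lemma s_pi V : (s (piZ V) <= s V)%N.
Proof. by rewrite leq_add // rkS // ?lsub_pi ?rsub_pi. Qed.

Lemma S2 Z : qcyclic r Z -> qflat r Z -> (piZ Z <= Z)%MS.
Proof.
move=> hc hf; apply/idPn => /row_subPn [i hi].
have h := hf _ hi.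
have h1 := r_le_s (Z + row i (piZ Z))%MS.
have h2 : (s (Z + row i (piZ Z))%MS <= s (piZ Z))%N.
  by apply: sS; rewrite addsmx_sub le_pi row_sub.
have h3 := s_pi Z.
have h4 := S1 hc.
rewrite /r in h h1 h4; lia.
Qed.


Lemma lsub_adds m1 m2 (A : 'M[Fq]_(m1, n1 + n2)) (B : 'M[Fq]_(m2, n1 + n2)) :
  (lsubmx (A + B)%MS :=: lsubmx A + lsubmx B)%MS.
Proof. by rewrite !lsubE; apply: addsmxMr. Qed.

Lemma rsub_adds m1 m2 (A : 'M[Fq]_(m1, n1 + n2)) (B : 'M[Fq]_(m2, n1 + n2)) :
  (rsubmx (A + B)%MS :=: rsubmx A + rsubmx B)%MS.
Proof. by rewrite !rsubE; apply: addsmxMr. Qed.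

Lemma S3a Z : qcyclic r Z -> qflat r Z -> qflat (qrank G1) <<lsubmx Z>>%MS.
Proof.
move=> hc hf x1 hx1; rewrite !qrankE rk_gen.
set x : 'rV[Fq]_(n1 + n2) := row_mx x1 0.
have hx : ~~ (x <= Z)%MS.
  by apply: contra hx1 => h; have := lsubS h; rewrite row_mxKl genmxE.
have h := hf x hx.
have h1 := r_le_s (Z + x)%MS.
have h2 : (rk G1 (lsubmx (Z + x)%MS) <= rk G1 (<<lsubmx Z>> + x1)%MS)%N.
  by apply: rkS; rewrite lsub_adds /x row_mxKl addsmxS // genmxE.
have h3 : (rk G2 (rsubmx (Z + x)%MS) <= rk G2 (rsubmx Z))%N.
  by apply: rkS; rewrite rsub_adds /x row_mxKr addsmx0 submx_refl.
have h4 := S1 hc.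
rewrite /r /s in h h1 h4.
have := leq_ltn_trans h4 (leq_trans h (leq_trans h1 (leq_add h2 h3))).
by rewrite ltn_add2r.
Qed.

Lemma S3b Z : qcyclic r Z -> qflat r Z -> qflat (qrank G2) <<rsubmx Z>>%MS.
Proof.
move=> hc hf x1 hx1; rewrite !qrankE rk_gen.
set x : 'rV[Fq]_(n1 + n2) := row_mx 0 x1.
have hx : ~~ (x <= Z)%MS.
  by apply: contra hx1 => h; have := rsubS h; rewrite row_mxKr genmxE.
have h := hf x hx.
have h1 := r_le_s (Z + x)%MS.
have h2 : (rk G2 (rsubmx (Z + x)%MS) <= rk G2 (<<rsubmx Z>> + x1)%MS)%N.
  by apply: rkS; rewrite rsub_adds /x row_mxKr addsmxS // genmxE.
have h3 : (rk G1 (lsubmx (Z + x)%MS) <= rk G1 (lsubmx Z))%N.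
  by apply: rkS; rewrite lsub_adds /x row_mxKl addsmx0 submx_refl.
have h4 := S1 hc.
rewrite /r /s in h h1 h4.
have := leq_ltn_trans h4 (leq_trans h (leq_trans h1 (leq_add h3 h2))).
by rewrite ltn_add2l.
Qed.


Lemma col_subl m1 m2 n (A : 'M[Fq]_(m1, n)) (B : 'M[Fq]_(m2, n)) : (A <= col_mx A B)%MS.
Proof. by apply/submxP; exists (row_mx 1%:M 0); rewrite mul_row_col mul1mx mul0mx addr0. Qed.
Lemma col_subr m1 m2 n (A : 'M[Fq]_(m1, n)) (B : 'M[Fq]_(m2, n)) : (B <= col_mx A B)%MS.
Proof. by apply/submxP; exists (row_mx 0 1%:M); rewrite mul_row_col mul1mx mul0mx add0r. Qed.

Lemma TL_col a n m1 m2 (H : 'M[L]_(a, n)) (A : 'M[Fq]_(m1, n)) (B : 'M[Fq]_(m2, n)) :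
  TL H (col_mx A B) = col_mx (TL H A) (TL H B).
Proof. by rewrite /TL map_col_mx mul_col_mx. Qed.

Lemma rank_adds_row m n (W : 'M[Fq]_(m, n)) (x : 'rV[Fq]_n) :
  (\rank (W + x)%MS <= (\rank W).+1)%N.
Proof.
case: (mxrank_adds_leqif W x) => h _; apply: leq_trans h _.
by rewrite -[(\rank W).+1]addn1 leq_add2l rank_leq_row.
Qed.

Lemma side1 (Z W : 'M[Fq]_(n1 + n2)) (x : 'rV[Fq]_(n1 + n2)) : qcyclic r Z -> qflat r Z ->
  (x <= Z)%MS -> (W <= Z)%MS -> (W + x == Z)%MS ->
  (TL G (row_mx <<lsubmx Z>>%MS (0 : 'M_(n1, n2))) <= TL G W)%MS.
Proof.
move=> hc hf hx hWZ /andP[_ hZWx].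
have hpZ := S2 hc hf.
set R := row_mx <<lsubmx Z>>%MS (0 : 'M_(n1, n2)).
set R2 := row_mx (0 : 'M_(n2, n1)) <<rsubmx Z>>%MS.
have ePi : piZ Z = col_mx R R2 by rewrite /piZ /dsum_space block_mxEv.
have hRZ : (R <= Z)%MS by apply: submx_trans hpZ; rewrite ePi col_subl.
have hR2Z : (R2 <= Z)%MS by apply: submx_trans hpZ; rewrite ePi col_subr.
set K := (W :&: R)%MS.
have hrk : (\rank R <= (\rank K).+1)%N.
  have e1 := mxrank_sum_cap W R.
  have e2 : (\rank (W + R)%MS <= \rank Z)%N by apply: mxrankS; rewrite addsmx_sub hWZ.
  have e3 : (\rank Z <= (\rank W).+1)%N.
    by apply: leq_trans (mxrankS hZWx) (rank_adds_row _ _).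
  rewrite -/K in e1; lia.
have [y [hyR hRKy]] := codim1 (capmxSr W R) hrk.
set V := (K + R2)%MS.
have hKW : (K <= W)%MS by apply: capmxSl.
have hVZ : (V <= Z)%MS by rewrite addsmx_sub hR2Z (submx_trans hKW hWZ).
have hyZ : (y <= Z)%MS by apply: submx_trans hyR hRZ.
have hVy : (V + y == Z)%MS.
  apply/andP; split; first by rewrite addsmx_sub hVZ hyZ.
  apply: submx_trans (le_pi Z) _; rewrite ePi col_mx_sub; apply/andP; split.
    by apply: submx_trans hRKy _; apply: addsmxS => //; apply: addsmxSl.
  by apply: submx_trans (addsmxSl _ _); apply: addsmxSr.
have [_ hcy] := (hc y).1 hyZ.
have eV := hcy V hVZ hVy.
have h1 := r_le_s V.
have h2 : (rk G1 (lsubmx V) <= rk G1 (lsubmx K))%N.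
  by apply: rkS; rewrite lsub_adds /R2 row_mxKl addsmx0 submx_refl.
have h3 : (rk G2 (rsubmx V) <= rk G2 (rsubmx Z))%N by apply: rkS; apply: rsubS.
have h4 := S1 hc.
have h5 : (rk G1 (lsubmx Z) <= rk G1 (lsubmx K))%N.
  rewrite /s eV in h1.
  have := leq_trans h4 (leq_trans h1 (leq_add h2 h3)).
  by rewrite leq_add2r.
have hKR : (K <= R)%MS by apply: capmxSr.
have r0 : rsubmx K = 0.
  apply: submx0null; have := rsubS hKR; rewrite /R row_mxKr; exact.
have eK : K = row_mx (lsubmx K) 0 by rewrite -{1}(hsubmxK K) r0.
have hlK : (lsubmx K <= <<lsubmx Z>>)%MS by have := lsubS hKR; rewrite /R row_mxKl.
have hT : (TL G1 (lsubmx K) <= TL G1 <<lsubmx Z>>%MS)%MS by apply: TLS.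
have hT' : (TL G1 <<lsubmx Z>>%MS <= TL G1 (lsubmx K))%MS.
  have [_ e] := mxrank_leqif_sup hT; rewrite -e eqn_leq mxrankS //=.
  by have := h5; rewrite -(rk_gen G1 (lsubmx Z)).
apply: submx_trans (TLS G (capmxSl W R)); rewrite -/K eK /R !TL_row !TL0.
exact: row0S.
Qed.

Lemma side2 (Z W : 'M[Fq]_(n1 + n2)) (x : 'rV[Fq]_(n1 + n2)) : qcyclic r Z -> qflat r Z ->
  (x <= Z)%MS -> (W <= Z)%MS -> (W + x == Z)%MS ->
  (TL G (row_mx (0 : 'M_(n2, n1)) <<rsubmx Z>>%MS) <= TL G W)%MS.
Proof.
move=> hc hf hx hWZ /andP[_ hZWx].
have hpZ := S2 hc hf.
set R := row_mx (0 : 'M_(n2, n1)) <<rsubmx Z>>%MS.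
set R1 := row_mx <<lsubmx Z>>%MS (0 : 'M_(n1, n2)).
have ePi : piZ Z = col_mx R1 R by rewrite /piZ /dsum_space block_mxEv.
have hRZ : (R <= Z)%MS by apply: submx_trans hpZ; rewrite ePi col_subr.
have hR1Z : (R1 <= Z)%MS by apply: submx_trans hpZ; rewrite ePi col_subl.
set K := (W :&: R)%MS.
have hrk : (\rank R <= (\rank K).+1)%N.
  have e1 := mxrank_sum_cap W R.
  have e2 : (\rank (W + R)%MS <= \rank Z)%N by apply: mxrankS; rewrite addsmx_sub hWZ.
  have e3 : (\rank Z <= (\rank W).+1)%N.
    by apply: leq_trans (mxrankS hZWx) (rank_adds_row _ _).
  rewrite -/K in e1; lia.
have [y [hyR hRKy]] := codim1 (capmxSr W R) hrk.
set V := (K + R1)%MS.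
have hKW : (K <= W)%MS by apply: capmxSl.
have hVZ : (V <= Z)%MS by rewrite addsmx_sub hR1Z (submx_trans hKW hWZ).
have hyZ : (y <= Z)%MS by apply: submx_trans hyR hRZ.
have hVy : (V + y == Z)%MS.
  apply/andP; split; first by rewrite addsmx_sub hVZ hyZ.
  apply: submx_trans (le_pi Z) _; rewrite ePi col_mx_sub; apply/andP; split.
    by apply: submx_trans (addsmxSl _ _); apply: addsmxSr.
  by apply: submx_trans hRKy _; apply: addsmxS => //; apply: addsmxSl.
have [_ hcy] := (hc y).1 hyZ.
have eV := hcy V hVZ hVy.
have h1 := r_le_s V.
have h2 : (rk G2 (rsubmx V) <= rk G2 (rsubmx K))%N.
  by apply: rkS; rewrite rsub_adds /R1 row_mxKr addsmx0 submx_refl.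
have h3 : (rk G1 (lsubmx V) <= rk G1 (lsubmx Z))%N by apply: rkS; apply: lsubS.
have h4 := S1 hc.
have h5 : (rk G2 (rsubmx Z) <= rk G2 (rsubmx K))%N.
  rewrite /s eV in h1.
  have := leq_trans h4 (leq_trans h1 (leq_add h3 h2)).
  by rewrite leq_add2l.
have hKR : (K <= R)%MS by apply: capmxSr.
have r0 : lsubmx K = 0.
  apply: submx0null; have := lsubS hKR; rewrite /R row_mxKl; exact.
have eK : K = row_mx 0 (rsubmx K) by rewrite -{1}(hsubmxK K) r0.
have hlK : (rsubmx K <= <<rsubmx Z>>)%MS by have := rsubS hKR; rewrite /R row_mxKr.
have hT : (TL G2 (rsubmx K) <= TL G2 <<rsubmx Z>>%MS)%MS by apply: TLS.
have hT' : (TL G2 <<rsubmx Z>>%MS <= TL G2 (rsubmx K))%MS.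
  have [_ e] := mxrank_leqif_sup hT; rewrite -e eqn_leq mxrankS //=.
  by have := h5; rewrite -(rk_gen G2 (rsubmx Z)).
apply: submx_trans (TLS G (capmxSl W R)); rewrite -/K eK /R !TL_row !TL0.
exact: row0S'.
Qed.


Lemma part_c (Z : 'M[Fq]_(n1 + n2)) :
  qcyclic_flat r Z -> qcyclic_flat (qrank G) Z.
Proof.
case=> hc hf.
have hpZ := S2 hc hf.
have e : (Z :=: piZ Z)%MS by apply/eqmxP; rewrite le_pi hpZ.
split.
  move=> x; split; last by case.
  move=> hx; split => // W hWZ hWx.
  rewrite !qrankE; apply/eqP; rewrite eqn_leq rkS //=.
  rewrite /rk; apply: mxrankS.
  apply: submx_trans (TLS G (le_pi Z)) _.
  rewrite /piZ /dsum_space block_mxEv TL_col col_mx_sub.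
  by rewrite (side1 hc hf hx hWZ hWx) (side2 hc hf hx hWZ hWx).
have ha := part_a (S3a hc hf) (S3b hc hf).
move=> x hx.
have hx' : ~~ (x <= piZ Z)%MS by rewrite -e.
have := ha x hx'; rewrite !qrankE.
by rewrite -(rk_eq G e) -(rk_eq G (adds_eqmx e (eqmx_refl x))).
Qed.

End Main2.


Theorem theorem6p6 (Fq : finFieldType) (L : fieldExtType Fq)
  (a1 a2 n1 n2 : nat) (G1 : 'M[L]_(a1, n1)) (G2 : 'M[L]_(a2, n2))
  (hG1 : row_free G1) (hG2 : row_free G2) :
  let G : 'M[L]_(a1 + a2, n1 + n2) := block_mx G1 0 0 G2 in
  let rho1 := qrank G1 in
  let rho2 := qrank G2 in
  let rhoN := qrank G in
  let rhoS := dsum_rank rho1 rho2 in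
  (forall (F1 : 'M[Fq]_n1) (F2 : 'M[Fq]_n2),
      qflat rho1 F1 -> qflat rho2 F2 -> qflat rhoN (dsum_space F1 F2)) /\
  (forall (O1 : 'M[Fq]_n1) (O2 : 'M[Fq]_n2),
      qopen rho1 O1 -> qopen rho2 O2 -> qopen rhoN (dsum_space O1 O2)) /\
  (forall Z : 'M[Fq]_(n1 + n2), qcyclic_flat rhoS Z -> qcyclic_flat rhoN Z) /\
  (forall I : 'M[Fq]_(n1 + n2), qindep rhoN I -> qindep rhoS I).
Proof.
move=> G rho1 rho2 rhoN rhoS; split; [|split; [|split]].
- by move=> F1 F2; apply: part_a.
- by move=> O1 O2; apply: part_b.
- by move=> Z; apply: part_c.
- by move=> I; apply: part_d.
Qed.
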